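(* Let $G$ be a finite connected metric graph without terminal vertices, $T$ its universal covering tree, $\Gamma=\pi_1(G)$, and let $(Y,d)$ be a locally compact Hadamard space. Let $\Lambda$ be a group acting properly and co-compactly by isometries on $Y$, let $\rho:\Gamma\to\Lambda$ be a homomorphism, and let $Z$ be the centraliser of $\rho(\Gamma)$ in $\Lambda$. Then there are constants $C_\star$ and $C$ such that for any locally rectifiable $\rho$-equivariant maps $u,v:T\to Y$ there exists $h\in Z$ such that the $L_\infty$-width of the geodesic homotopy $H$ between $u$ and $h\cdot v$ satisfies $$W_\infty(H)\leqslant C_\star\big(L(u)+L(v)\big)+C.$$
   Context: A Hadamard space is a complete metric space $(Y,d)$ such that any two points are joined by a curve whose length equals their distance (a geodesic), and for any points $P,Q,R$ and $0\le\lambda\le1$, the point $Q_\lambda$ on the geodesic from $Q$ to $R$ with $d(Q_\lambda,Q)=\lambda d(Q,R)$ satisfies $d(P,Q_\lambda)^2\le(1-\lambda)d(P,Q)^2+\lambda d(P,R)^2-\lambda(1-\lambda)d(Q,R)^2$. The action of $\Lambda$ is proper if each $y\in Y$ has $r>0$ with $\{g\in\Lambda: gB(y,r)\cap B(y,r)\ne\varnothing\}$ finite, and co-compact if $Y/\Lambda$ is compact. Edges of $G$ and $T$ are identified with compact intervals; $\Gamma$ acts on $T$ by deck transformations. A map $u:T\to Y$ is $\rho$-equivariant if $u(g\cdot x)=\rho(g)\cdot u(x)$; locally rectifiable if each edge has rectifiable image; its length $L(u)$ is the sum over edges of $G$ of the lengths of $u$ restricted to lifts of these edges. For $h\in Z$,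 $(h\cdot v)(x)=h\cdot v(x)$ is $\rho$-equivariant. The geodesic homotopy $H$ between $u$ and $w$ is $H(s,x)=$ point at fraction $s$ of the geodesic from $u(x)$ to $w(x)$, and $W_\infty(H)=\sup_{x\in T}d(u(x),w(x))$. *)

(* Defs.v *)
From Stdlib Require Import Reals Lra List ClassicalEpsilon.
Open Scope R_scope.

(* Combinatorial graphs (multigraphs with loops; each edge carries an  *)
(* orientation used only for parametrising it as an interval).        *)
Record graph := Graph { gV : Type; gE : Type; gsrc : gE -> gV; gtgt : gE -> gV }.

(* half-edges: (e, true) starts at src e, (e, false) starts at tgt e *)
Definition hstart (G : graph) (h : gE G * bool) : gV G :=
  if snd h then gsrc G (fst h) else gtgt G (fst h).
Definition hend (G : graph) (h : gE G * bool) : gV G :=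
  if snd h then gtgt G (fst h) else gsrc G (fst h).

Fixpoint is_walk (G : graph) (x : gV G) (w : list (gE G * bool)) (y : gV G) : Prop :=
  match w with
  | nil => x = y
  | h :: w' => hstart G h = x /\ is_walk G (hend G h) w' y
  end.

(* no immediate backtracking *)
Fixpoint reduced (G : graph) (w : list (gE G * bool)) : Prop :=
  match w with
  | h1 :: ((h2 :: _) as w') =>
      ~ (fst h2 = fst h1 /\ snd h2 = negb (snd h1)) /\ reduced G w'
  | _ => True
  end.

Definition gconnected (G : graph) : Prop :=
  inhabited (gV G) /\ forall x y : gV G, exists w, is_walk G x w y.

Definition is_tree (T : graph) : Prop :=
  gconnected T /\
  forall (x : gV T) w, w <> nil -> is_walk T x w x -> ~ reduced T w.

(* a terminal vertex is a vertex of degree one (exactly one half-edge) *)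
Definition no_terminal_vertices (G : graph) : Prop :=
  forall v : gV G,
    ~ (exists h, hstart G h = v /\ forall h', hstart G h' = v -> h' = h).

Record mgraph := MGraph {
  mg :> graph;
  mlen : gE mg -> R;          (* edge e is identified with [0, mlen e] *)
  mEdges : list (gE mg)
}.

Definition finite_metric_graph (G : mgraph) : Prop :=
  (exists lv : list (gV G), forall v, In v lv) /\
  NoDup (mEdges G) /\ (forall e, In e (mEdges G)) /\
  (forall e, 0 < mlen G e).

Record group := Group {
  gcar :> Type;
  gmul : gcar -> gcar -> gcar;
  gone : gcar;
  ginv : gcar -> gcar;
  gmulA : forall x y z, gmul x (gmul y z) = gmul (gmul x y) z;
  gmul1 : forall x, gmul gone x = x;
  gmulV : forall x, gmul (ginv x) x = gone
}.

Definition group_hom (A B : group) (f : A -> B) : Prop :=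
  forall x y, f (gmul A x y) = gmul B (f x) (f y).

Definition in_centraliser (Gam Lam : group) (rho : Gam -> Lam) (h : Lam) : Prop :=
  forall g : Gam, gmul Lam h (rho g) = gmul Lam (rho g) h.

(* (pV, pE) : T -> G is a graph morphism that is a local bijection on  *)
(* half-edges at every vertex (a covering map), T is a tree (so the    *)
(* covering is universal), and Gamma acts on T by graph automorphisms  *)
(* over G, simply transitively on every fibre (so Gamma is the deck    *)
(* group, i.e. pi_1(G)).                                              *)
Definition universal_covering_tree (G : graph) (T : graph)
  (pV : gV T -> gV G) (pE : gE T -> gE G)
  (Gam : group) (aV : Gam -> gV T -> gV T) (aE : Gam -> gE T -> gE T) : Prop :=
  is_tree T /\
  (forall e, gsrc G (pE e) = pV (gsrc T e)) /\
  (forall e, gtgt G (pE e) = pV (gtgt T e)) /\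
  (forall w : gV G, exists v : gV T, pV v = w) /\
  (forall (v : gV T) (h' : gE G * bool), hstart G h' = pV v ->
      exists h : gE T * bool, hstart T h = v /\ (pE (fst h), snd h) = h') /\
  (forall (v : gV T) (h1 h2 : gE T * bool), hstart T h1 = v -> hstart T h2 = v ->
      (pE (fst h1), snd h1) = (pE (fst h2), snd h2) -> h1 = h2) /\
  (forall v, aV (gone Gam) v = v) /\ (forall e, aE (gone Gam) e = e) /\
  (forall g h v, aV (gmul Gam g h) v = aV g (aV h v)) /\
  (forall g h e, aE (gmul Gam g h) e = aE g (aE h e)) /\
  (forall g e, gsrc T (aE g e) = aV g (gsrc T e)) /\
  (forall g e, gtgt T (aE g e) = aV g (gtgt T e)) /\
  (forall g v, pV (aV g v) = pV v) /\ (forall g e, pE (aE g e) = pE e) /\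
  (forall v w, pV v = pV w -> exists g, aV g v = w /\ forall g', aV g' v = w -> g' = g).

Definition metric (Y : Type) (d : Y -> Y -> R) : Prop :=
  (forall x y, d x y = 0 <-> x = y) /\
  (forall x y, d x y = d y x) /\
  (forall x y z, d x z <= d x y + d y z).

Definition complete (Y : Type) (d : Y -> Y -> R) : Prop :=
  forall x : nat -> Y,
    (forall eps, 0 < eps -> exists N, forall n m, (N <= n)%nat -> (N <= m)%nat -> d (x n) (x m) < eps) ->
    exists l, forall eps, 0 < eps -> exists N, forall n, (N <= n)%nat -> d (x n) l < eps.

Definition continuous_on (Y : Type) (d : Y -> Y -> R) (c : R -> Y) (a b : R) : Prop :=
  forall t, a <= t <= b -> forall eps, 0 < eps -> exists delta, 0 < delta /\
    forall s, a <= s <= b -> Rabs (s - t) < delta -> d (c s) (c t) < eps.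

Fixpoint rsum (n : nat) (f : nat -> R) : R :=
  match n with O => 0 | S k => rsum k f + f k end.

Definition polygonal_sums (Y : Type) (d : Y -> Y -> R) (c : R -> Y) (a b : R) (s : R) : Prop :=
  exists (n : nat) (t : nat -> R),
    t O = a /\ t n = b /\ (forall i, (i < n)%nat -> t i <= t (S i)) /\
    s = rsum n (fun i => d (c (t i)) (c (t (S i)))).

Definition rectifiable (Y : Type) (d : Y -> Y -> R) (c : R -> Y) (a b : R) : Prop :=
  bound (polygonal_sums Y d c a b).

Definition has_length (Y : Type) (d : Y -> Y -> R) (c : R -> Y) (a b l : R) : Prop :=
  is_lub (polygonal_sums Y d c a b) l.

Definition curve_length (Y : Type) (d : Y -> Y -> R) (c : R -> Y) (a b : R) : R :=
  epsilon (inhabits 0) (fun l => has_length Y d c a b l).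

Definition curve_from_to (Y : Type) (d : Y -> Y -> R) (c : R -> Y) (P Q : Y) : Prop :=
  continuous_on Y d c 0 1 /\ c 0 = P /\ c 1 = Q.

Definition hadamard_space (Y : Type) (d : Y -> Y -> R) : Prop :=
  metric Y d /\ complete Y d /\
  (forall P Q, exists c, curve_from_to Y d c P Q /\ has_length Y d c 0 1 (d P Q)) /\
  (forall P Q R0 lam c s, 0 <= lam <= 1 ->
     curve_from_to Y d c Q R0 -> has_length Y d c 0 1 (d Q R0) ->
     0 <= s <= 1 -> d (c s) Q = lam * d Q R0 ->
     (d P (c s))^2 <= (1 - lam) * (d P Q)^2 + lam * (d P R0)^2
                      - lam * (1 - lam) * (d Q R0)^2).

(* every point has a (sequentially) compact closed ball around it *)
Definition locally_compact (Y : Type) (d : Y -> Y -> R) : Prop :=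
  forall y, exists r, 0 < r /\
    forall x : nat -> Y, (forall n, d y (x n) <= r) ->
      exists (phi : nat -> nat) (z : Y),
        (forall n, (phi n < phi (S n))%nat) /\ d y z <= r /\
        forall eps, 0 < eps -> exists N, forall n, (N <= n)%nat -> d (x (phi n)) z < eps.

Definition open_set (Y : Type) (d : Y -> Y -> R) (U : Y -> Prop) : Prop :=
  forall x, U x -> exists eps, 0 < eps /\ forall y, d x y < eps -> U y.

Definition isometric_action (Lam : group) (Y : Type) (d : Y -> Y -> R)
  (act : Lam -> Y -> Y) : Prop :=
  (forall y, act (gone Lam) y = y) /\
  (forall g h y, act (gmul Lam g h) y = act g (act h y)) /\
  (forall g x y, d (act g x) (act g y) = d x y).

Definition proper_action (Lam : group) (Y : Type) (d : Y -> Y -> R)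
  (act : Lam -> Y -> Y) : Prop :=
  forall y, exists r, 0 < r /\ exists l : list Lam,
    forall g, (exists z, d y z < r /\ d y (act g z) < r) -> In g l.

(* Y / Lambda compact (quotient topology: open sets of Y/Lambda are the
   Lambda-invariant open sets of Y) *)
Definition cocompact_action (Lam : group) (Y : Type) (d : Y -> Y -> R)
  (act : Lam -> Y -> Y) : Prop :=
  forall (I : Type) (U : I -> Y -> Prop),
    (forall i, open_set Y d (U i)) ->
    (forall i g y, U i y -> U i (act g y)) ->
    (forall y, exists i, U i y) ->
    exists l : list I, forall y, exists i, In i l /\ U i y.

(* Points of T: vertices, and points (e, t) with 0 <= t <= len e on edges *)
Inductive tpoint (T : graph) : Type :=
  | TVert (v : gV T)
  | TEdge (e : gE T) (t : R).
Arguments TVert {T} v.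
Arguments TEdge {T} e t.

Definition in_T (T : graph) (lenT : gE T -> R) (x : tpoint T) : Prop :=
  match x with TVert _ => True | TEdge e t => 0 <= t <= lenT e end.

Record tmap (T : graph) (Y : Type) := TMap {
  mV : gV T -> Y;
  mE : gE T -> R -> Y
}.
Arguments TMap {T Y}.
Arguments mV {T Y}.
Arguments mE {T Y}.

Definition teval {T : graph} {Y : Type} (u : tmap T Y) (x : tpoint T) : Y :=
  match x with TVert v => mV u v | TEdge e t => mE u e t end.

(* u is a well-defined continuous map T -> Y *)
Definition tmap_ok (T : graph) (lenT : gE T -> R) (Y : Type) (d : Y -> Y -> R)
  (u : tmap T Y) : Prop :=
  forall e, mE u e 0 = mV u (gsrc T e) /\ mE u e (lenT e) = mV u (gtgt T e) /\
            continuous_on Y d (mE u e) 0 (lenT e).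

Definition equivariant (T : graph) (lenT : gE T -> R) (Gam Lam : group)
  (aV : Gam -> gV T -> gV T) (aE : Gam -> gE T -> gE T)
  (Y : Type) (act : Lam -> Y -> Y) (rho : Gam -> Lam) (u : tmap T Y) : Prop :=
  (forall g v, mV u (aV g v) = act (rho g) (mV u v)) /\
  (forall g e t, 0 <= t <= lenT e -> mE u (aE g e) t = act (rho g) (mE u e t)).

Definition loc_rectifiable (T : graph) (lenT : gE T -> R) (Y : Type)
  (d : Y -> Y -> R) (u : tmap T Y) : Prop :=
  forall e, rectifiable Y d (mE u e) 0 (lenT e).

(* L(u): sum over edges of G of the length of u on a lift of the edge *)
Definition total_length (G : mgraph) (T : graph) (lift : gE G -> gE T)
  (Y : Type) (d : Y -> Y -> R) (u : tmap T Y) : R :=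
  fold_right Rplus 0
    (map (fun e => curve_length Y d (mE u (lift e)) 0 (mlen G e)) (mEdges G)).

Definition translate {T : graph} {Y : Type} {Lam : group} (act : Lam -> Y -> Y)
  (h : Lam) (v : tmap T Y) : tmap T Y :=
  TMap (fun x => act h (mV v x)) (fun e t => act h (mE v e t)).

(* W_oo(H) <= c for the geodesic homotopy H between u and w, where
   W_oo(H) = sup_{x in T} d(u(x), w(x)) *)
Definition width_le (T : graph) (lenT : gE T -> R) (Y : Type) (d : Y -> Y -> R)
  (u w : tmap T Y) (c : R) : Prop :=
  forall x : tpoint T, in_T T lenT x -> d (teval u x) (teval w x) <= c.

(* Main.v *)
Require Import Defs.
From Stdlib Require Import Reals Lra Lia Psatz List Classical ClassicalEpsilon Ranalysis5 ZArith.
Open Scope R_scope.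


Section Metric.
Context (Y : Type) (d : Y -> Y -> R) (Hm : metric Y d).

Lemma d_refl x : d x x = 0.
Proof. destruct Hm as [H _]. apply H; reflexivity. Qed.
Lemma d_sym x y : d x y = d y x.
Proof. destruct Hm as [_ [H _]]. apply H. Qed.
Lemma d_tri x y z : d x z <= d x y + d y z.
Proof. destruct Hm as [_ [_ H]]. apply H. Qed.
Lemma d_nonneg x y : 0 <= d x y.
Proof. pose proof (d_tri x y x). rewrite d_refl, (d_sym y x) in H. lra. Qed.
Lemma d_eq0 x y : d x y = 0 -> x = y.
Proof. destruct Hm as [H _]. apply H. Qed.
End Metric.

Definition between (Y : Type) (d : Y -> Y -> R) (P Q : Y) (t : R) (z : Y) : Prop :=
  d P z = t * d P Q /\ d z Q = (1 - t) * d P Q.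

Definition CNprop (Y : Type) (d : Y -> Y -> R) (P Q : Y) (t : R) (z : Y) : Prop :=
  forall X, (d X z)^2 <= (1 - t) * (d X P)^2 + t * (d X Q)^2 - t * (1 - t) * (d P Q)^2.

Section Geo.
Context (Y : Type) (d : Y -> Y -> R) (HY : hadamard_space Y d).

Let Hm : metric Y d := proj1 HY.

Lemma clamp_cont (c : R -> Y) (P : Y) :
  continuous_on Y d c 0 1 ->
  forall a, 0 <= a <= 1 ->
  continuity_pt (fun s => d (c (Rmax 0 (Rmin 1 s))) P) a.
Proof.
  intros Hc a Ha.
  unfold continuity_pt, continue_in, limit1_in, limit_in. simpl.
  intros eps Heps.
  destruct (Hc a Ha eps Heps) as [del [Hdel H]].
  exists del. split; [lra|].
  intros x [_ Hx]. unfold R_dist in *.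
  assert (Ea : Rmax 0 (Rmin 1 a) = a).
  { unfold Rmax, Rmin. repeat destruct Rle_dec; lra. }
  rewrite Ea.
  set (s := Rmax 0 (Rmin 1 x)).
  assert (Hs : 0 <= s <= 1) by (unfold s, Rmax, Rmin; repeat destruct Rle_dec; lra).
  assert (Hsa : Rabs (s - a) < del).
  { unfold s. unfold Rmax, Rmin. repeat destruct Rle_dec;
    unfold Rabs in *; repeat destruct Rcase_abs; lra. }
  specialize (H s Hs Hsa).
  pose proof (d_tri Y d Hm (c s) (c a) P).
  pose proof (d_tri Y d Hm (c a) (c s) P).
  rewrite (d_sym Y d Hm (c a) (c s)) in H1.
  unfold Rabs; destruct Rcase_abs; lra.
Qed.

Lemma geo_exists (P Q : Y) (t : R) : 0 <= t <= 1 ->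
  exists z, between Y d P Q t z /\ CNprop Y d P Q t z.
Proof.
  intros Ht.
  pose proof (d_nonneg Y d Hm P Q) as HD.
  destruct (Req_dec t 0) as [E0|N0].
  { subst. exists P. split.
    - unfold between. rewrite (d_refl Y d Hm). split; ring.
    - intros X. nra. }
  destruct (Req_dec t 1) as [E1|N1].
  { subst. exists Q. split.
    - unfold between. rewrite (d_refl Y d Hm). split; ring.
    - intros X. nra. }
  destruct (Req_dec (d P Q) 0) as [ED|ND].
  { apply (d_eq0 Y d Hm) in ED. subst Q. exists P. split.
    - unfold between. rewrite (d_refl Y d Hm). split; ring.
    - intros X. rewrite (d_refl Y d Hm). nra. }
  pose proof HY as HY'. destruct HY' as [_ [_ [Hgeo HCN]]].
  destruct (Hgeo P Q) as [c [[Hc [Hc0 Hc1]] Hlen]].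
  set (f := fun s => d (c (Rmax 0 (Rmin 1 s))) P - t * d P Q).
  assert (Hf : forall a, 0 <= a <= 1 -> continuity_pt f a).
  { intros a Ha. unfold f. apply continuity_pt_minus.
    - apply clamp_cont; auto.
    - apply continuity_pt_const. intros x y; reflexivity. }
  assert (E0' : Rmax 0 (Rmin 1 0) = 0) by (unfold Rmax, Rmin; repeat destruct Rle_dec; lra).
  assert (E1' : Rmax 0 (Rmin 1 1) = 1) by (unfold Rmax, Rmin; repeat destruct Rle_dec; lra).
  destruct (IVT_interv f 0 1 Hf) as [s [Hs Hfs]].
  - lra.
  - unfold f. rewrite E0', Hc0, (d_refl Y d Hm). nra.
  - unfold f. rewrite E1', Hc1, (d_sym Y d Hm Q P). nra.
  - assert (Es : Rmax 0 (Rmin 1 s) = s) by (unfold Rmax, Rmin; repeat destruct Rle_dec; lra).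
    unfold f in Hfs. rewrite Es in Hfs.
    exists (c s).
    assert (H1 : d P (c s) = t * d P Q) by (rewrite (d_sym Y d Hm P (c s)); lra).
    assert (H2 : d P (c s) + d (c s) Q <= d P Q).
    { destruct Hlen as [Hub _]. apply Hub.
      exists 2%nat, (fun i => match i with O => 0 | S O => s | _ => 1 end).
      split; [reflexivity|]. split; [reflexivity|]. split.
      - intros i Hi. destruct i as [|[|i]]; simpl; lra.
      - simpl. rewrite Hc0, Hc1. ring. }
    pose proof (d_tri Y d Hm P (c s) Q).
    split.
    + split; [exact H1|]. lra.
    + intros X.
      apply (HCN X P Q t c s); [exact Ht | split; [exact Hc | split; assumption] | exact Hlen | exact Hs | ].
      rewrite (d_sym Y d Hm (c s) P). exact H1.
Qed.

Lemma between_CN (P Q : Y) (t : R) (z : Y) : 0 <= t <= 1 ->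
  between Y d P Q t z -> CNprop Y d P Q t z.
Proof.
  intros Ht Hb.
  destruct (geo_exists P Q t Ht) as [z' [Hb' HC']].
  assert (z' = z).
  { apply (d_eq0 Y d Hm).
    specialize (HC' z).
    destruct Hb as [B1 B2].
    rewrite (d_sym Y d Hm z P), B1, B2 in HC'.
    pose proof (d_nonneg Y d Hm z z').
    rewrite (d_sym Y d Hm z z') in H.
    assert (Hq : d z z' ^ 2 <= 0).
    { eapply Rle_trans; [exact HC'|]. right. ring. }
    rewrite (d_sym Y d Hm z' z) in *. nra. }
  subst; auto.
Qed.

Lemma between_exists (P Q : Y) (t : R) : 0 <= t <= 1 -> exists z, between Y d P Q t z.
Proof. intros Ht. destruct (geo_exists P Q t Ht) as [z [H _]]. eauto. Qed.

Lemma between_conv_pt (P Q X : Y) (t : R) (z : Y) : 0 <= t <= 1 ->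
  between Y d P Q t z -> d X z <= (1 - t) * d X P + t * d X Q.
Proof.
  intros Ht Hb. pose proof (between_CN P Q t z Ht Hb X) as H.
  pose proof (d_tri Y d Hm P X Q). pose proof (d_tri Y d Hm X P Q).
  pose proof (d_tri Y d Hm X Q P).
  rewrite (d_sym Y d Hm P X) in *. rewrite (d_sym Y d Hm Q P) in *.
  pose proof (d_nonneg Y d Hm X z). pose proof (d_nonneg Y d Hm X P).
  pose proof (d_nonneg Y d Hm X Q). pose proof (d_nonneg Y d Hm P Q).
  set (a := d X P) in *. set (b := d X Q) in *. set (D := d P Q) in *.
  assert (Hab : (a - b)^2 <= D^2).
  { assert (0 <= (D - (a - b)) * (D + (a - b))) by (apply Rmult_le_pos; lra). nra. }
  assert (Htt : 0 <= t * (1 - t)) by (apply Rmult_le_pos; lra).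
  assert (H' : (d X z)^2 <= ((1-t)*a + t*b)^2).
  { eapply Rle_trans; [exact H|].
    assert (t * (1 - t) * (a - b)^2 <= t * (1 - t) * D^2) by (apply Rmult_le_compat_l; lra).
    nra. }
  assert (0 <= (1-t)*a + t*b) by nra.
  apply Rsqr_incr_0_var; unfold Rsqr; nra.
Qed.

Lemma between_common_start (a x y m n : Y) (t : R) : 0 <= t <= 1 ->
  between Y d a x t m -> between Y d a y t n -> d m n <= t * d x y.
Proof.
  intros Ht Hm' Hn.
  pose proof (between_CN a x t m Ht Hm' n) as C1.
  pose proof (between_CN a y t n Ht Hn x) as C2.
  destruct Hn as [N1 N2].
  rewrite (d_sym Y d Hm n a), N1 in C1.
  rewrite (d_sym Y d Hm x a) in C2.
  rewrite (d_sym Y d Hm n x) in C1.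
  assert (Hsq : (d n m)^2 <= (t * d x y)^2).
  { assert (t * d x n ^ 2 <= t * ((1 - t) * d a x ^ 2 + t * d x y ^ 2 - t * (1 - t) * d a y ^ 2))
      by (apply Rmult_le_compat_l; lra).
    eapply Rle_trans; [exact C1|]. nra. }
  pose proof (d_nonneg Y d Hm n m). pose proof (d_nonneg Y d Hm x y).
  rewrite (d_sym Y d Hm m n). apply Rsqr_incr_0_var; unfold Rsqr; nra.
Qed.

Lemma between_rev (P Q : Y) (t : R) (z : Y) :
  between Y d P Q t z -> between Y d Q P (1 - t) z.
Proof.
  intros [B1 B2]. unfold between.
  rewrite (d_sym Y d Hm Q z), (d_sym Y d Hm Q P), B2.
  rewrite (d_sym Y d Hm z P), B1. split; ring.
Qed.

Lemma between_conv (P Q P' Q' z z' : Y) (t : R) : 0 <= t <= 1 ->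
  between Y d P Q t z -> between Y d P' Q' t z' ->
  d z z' <= (1 - t) * d P P' + t * d Q Q'.
Proof.
  intros Ht Hz Hz'.
  destruct (between_exists P Q' t Ht) as [w Hw].
  pose proof (between_common_start P Q Q' z w t Ht Hz Hw).
  assert (Ht' : 0 <= 1 - t <= 1) by lra.
  pose proof (between_common_start Q' P P' w z' (1 - t) Ht'
                (between_rev _ _ _ _ Hw) (between_rev _ _ _ _ Hz')).
  pose proof (d_tri Y d Hm z w z'). lra.
Qed.

End Geo.

Lemma between_iso (Y : Type) (d : Y -> Y -> R) (f : Y -> Y) (P Q z : Y) (t : R) :
  (forall x y, d (f x) (f y) = d x y) ->
  between Y d P Q t z -> between Y d (f P) (f Q) t (f z).
Proof. intros Hf [B1 B2]. unfold between. rewrite !Hf. auto. Qed.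


Section Grp.
Context (Lam : group).
Local Notation "x * y" := (gmul Lam x y).
Local Notation "1" := (gone Lam).
Local Notation inv := (ginv Lam).

Lemma g_cancel_l a x y : a * x = a * y -> x = y.
Proof.
  intros H. rewrite <- (gmul1 Lam x), <- (gmul1 Lam y), <- (gmulV Lam a).
  rewrite <- !gmulA, H. reflexivity.
Qed.

Lemma g_mulV_r x : x * inv x = 1.
Proof.
  set (e := x * inv x).
  assert (Hee : e * e = e).
  { unfold e. rewrite <- gmulA. rewrite (gmulA Lam (inv x) x (inv x)).
    rewrite gmulV, gmul1. reflexivity. }
  rewrite <- (gmul1 Lam e), <- (gmulV Lam e), <- gmulA, Hee. reflexivity.
Qed.

Lemma g_mul1_r x : x * 1 = x.
Proof. rewrite <- (gmulV Lam x), gmulA, g_mulV_r, gmul1. reflexivity. Qed.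

Lemma g_cancel_r a x y : x * a = y * a -> x = y.
Proof.
  intros H. rewrite <- (g_mul1_r x), <- (g_mul1_r y), <- (g_mulV_r a).
  rewrite !gmulA, H. reflexivity.
Qed.

Lemma g_inv_inv x : inv (inv x) = x.
Proof. apply (g_cancel_r (inv x)). rewrite gmulV, g_mulV_r. reflexivity. Qed.

Lemma g_inv_mul x y : inv (x * y) = inv y * inv x.
Proof.
  apply (g_cancel_r (x * y)). rewrite gmulV.
  rewrite <- gmulA, (gmulA Lam (inv x) x y), gmulV, gmul1, gmulV. reflexivity.
Qed.

Lemma g_inv1 : inv 1 = 1.
Proof. rewrite <- (gmul1 Lam (inv 1)). apply g_mulV_r. Qed.

Lemma g_VK x y : inv x * (x * y) = y.
Proof. rewrite gmulA, gmulV, gmul1. reflexivity. Qed.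
Lemma g_KV x y : x * (inv x * y) = y.
Proof. rewrite gmulA, g_mulV_r, gmul1. reflexivity. Qed.

Definition gcomm (a b : gcar Lam) : Prop := a * b = b * a.

Lemma gcomm_mul a b s : gcomm a s -> gcomm b s -> gcomm (a * b) s.
Proof.
  unfold gcomm. intros Ha Hb.
  rewrite <- gmulA, Hb, gmulA, Ha, gmulA. reflexivity.
Qed.

Lemma gcomm_inv a s : gcomm a s -> gcomm (inv a) s.
Proof.
  unfold gcomm. intros Ha.
  apply (g_cancel_l a). rewrite gmulA, g_mulV_r, gmul1.
  apply (g_cancel_r a). rewrite <- !gmulA. rewrite (gmulV Lam a), g_mul1_r. symmetry. exact Ha.
Qed.

Lemma gcomm_1 s : gcomm 1 s.
Proof. unfold gcomm. rewrite gmul1, g_mul1_r. reflexivity. Qed.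

Definition conj (l s : gcar Lam) := inv l * (s * l).

Lemma conj_mul x y s : conj (x * y) s = conj y (conj x s).
Proof. unfold conj. rewrite g_inv_mul. rewrite <- !gmulA. reflexivity. Qed.

Lemma conj_1 s : conj 1 s = s.
Proof. unfold conj. rewrite g_inv1, gmul1, g_mul1_r. reflexivity. Qed.

Lemma conj_fix_comm x s : conj x s = s -> gcomm x s.
Proof.
  unfold conj, gcomm. intros H. apply (g_cancel_l (inv x)).
  rewrite H, g_VK. reflexivity.
Qed.

Lemma conj_eq_comm a b s : conj a s = conj b s -> gcomm (a * inv b) s.
Proof.
  intros H. apply conj_fix_comm. rewrite conj_mul, H, <- conj_mul, g_mulV_r, conj_1.
  reflexivity.
Qed.

End Grp.

Section Act.
Context (Lam : group) (Y : Type) (d : Y -> Y -> R) (act : Lam -> Y -> Y)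
        (Ha : isometric_action Lam Y d act).

Lemma act1 y : act (gone Lam) y = y.
Proof. apply (proj1 Ha). Qed.
Lemma actM g h y : act (gmul Lam g h) y = act g (act h y).
Proof. apply (proj1 (proj2 Ha)). Qed.
Lemma act_iso g x y : d (act g x) (act g y) = d x y.
Proof. apply (proj2 (proj2 Ha)). Qed.
Lemma act_VK g y : act (ginv Lam g) (act g y) = y.
Proof. rewrite <- actM, gmulV, act1. reflexivity. Qed.
Lemma act_KV g y : act g (act (ginv Lam g) y) = y.
Proof. rewrite <- actM, g_mulV_r, act1. reflexivity. Qed.
End Act.


Definition incr (phi : nat -> nat) : Prop := forall n, (phi n < phi (S n))%nat.

Lemma incr_mono phi : incr phi -> forall m n, (m < n)%nat -> (phi m < phi n)%nat.
Proof.
  intros H m n Hmn. induction Hmn.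
  - apply H.
  - specialize (H m0). lia.
Qed.

Lemma incr_ge phi : incr phi -> forall n, (n <= phi n)%nat.
Proof. intros H n. induction n; [lia|]. specialize (H n). lia. Qed.

Lemma incr_comp phi psi : incr phi -> incr psi -> incr (fun n => phi (psi n)).
Proof. intros H1 H2 n. apply incr_mono; auto. Qed.

Lemma inf_sub (P : nat -> Prop) :
  (forall N, exists n, (N <= n)%nat /\ P n) -> exists phi, incr phi /\ forall n, P (phi n).
Proof.
  intros H. destruct (choice _ H) as [g Hg].
  exists (fix f n := match n with O => g O | S k => g (S (f k)) end).
  split.
  - intros n. simpl. destruct (Hg (S ((fix f n := match n with O => g O | S k => g (S (f k)) end) n))). lia.
  - intros n. destruct n; simpl; apply Hg.
Qed.

Lemma pigeon_gen (A : Type) (L : list A) : forall (f : nat -> A) N0,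
  (forall n, (N0 <= n)%nat -> In (f n) L) ->
  exists v, In v L /\ exists phi, incr phi /\ forall n, f (phi n) = v.
Proof.
  induction L as [|a L IH]; intros f N0 H.
  - destruct (H N0 (le_n _)).
  - destruct (classic (forall N, exists n, (N <= n)%nat /\ f n = a)) as [Hinf|Hfin].
    + exists a. split; [left; auto|]. apply (inf_sub (fun n => f n = a)). exact Hinf.
    + apply not_all_ex_not in Hfin. destruct Hfin as [N HN].
      destruct (IH f (Nat.max N N0)) as [v [Hv Hphi]].
      * intros n Hn. destruct (H n ltac:(lia)) as [E|E]; auto.
        exfalso. apply HN. exists n. split; [lia|auto].
      * exists v. split; [right; auto|auto].
Qed.

Lemma pigeon (A : Type) (L : list A) (f : nat -> A) :
  (forall n, In (f n) L) ->
  exists v, In v L /\ exists phi, incr phi /\ forall n, f (phi n) = v.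
Proof. intros H. apply (pigeon_gen A L f O). auto. Qed.

Definition conv (Y : Type) (d : Y -> Y -> R) (x : nat -> Y) (z : Y) : Prop :=
  forall eps, 0 < eps -> exists N, forall n, (N <= n)%nat -> d (x n) z < eps.

Lemma conv_sub Y d x z phi : conv Y d x z -> incr phi -> conv Y d (fun n => x (phi n)) z.
Proof.
  intros H Hp eps He. destruct (H eps He) as [N HN]. exists N. intros n Hn.
  apply HN. pose proof (incr_ge phi Hp n). lia.
Qed.

Lemma arch_inv (e : R) : 0 < e -> exists N, forall n, (N <= n)%nat -> 1 / (INR n + 1) < e.
Proof.
  intros He. destruct (archimed (1 / e)) as [H1 _].
  assert (Hpos : 0 <= IZR (up (1/e))).
  { assert (0 < 1 / e) by (apply Rdiv_lt_0_compat; lra). lra. }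
  exists (Z.to_nat (up (1 / e))). intros n Hn.
  apply le_INR in Hn. rewrite INR_IZR_INZ, Z2Nat.id in Hn.
  2:{ apply le_IZR. lra. }
  assert (0 < INR n + 1) by (pose proof (pos_INR n); lra).
  apply (Rmult_lt_reg_r (INR n + 1)); auto.
  unfold Rdiv. rewrite Rmult_1_l, Rinv_l by lra.
  assert (Ee : 1 / e * e = 1) by (field; lra).
  assert (Hl : 1 / e < INR n + 1) by lra.
  apply (Rmult_lt_compat_r e) in Hl; auto. lra.
Qed.

Lemma le_eps (x c : R) : (forall e, 0 < e -> x <= c + e) -> x <= c.
Proof.
  intros H. destruct (Rle_dec x c) as [|Hn]; auto.
  specialize (H ((x - c)/2) ltac:(lra)). lra.
Qed.


Section Core1.
Context (Y : Type) (d : Y -> Y -> R) (HY : hadamard_space Y d) (HLC : locally_compact Y d)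
  (Lam : group) (act : Lam -> Y -> Y) (Hact : isometric_action Lam Y d act)
  (Hpr : proper_action Lam Y d act) (Hcc : cocompact_action Lam Y d act).

Let Hm : metric Y d := proj1 HY.

Definition ballcpt (y : Y) (r : R) : Prop :=
  forall x : nat -> Y, (forall n, d y (x n) <= r) ->
    exists phi z, incr phi /\ d y z <= r /\ conv Y d (fun n => x (phi n)) z.

Lemma cover_exists : exists cov : list (Y * R),
  (forall p, In p cov -> 0 < snd p /\ ballcpt (fst p) (snd p)) /\
  (forall y, exists p l, In p cov /\ d (fst p) (act l y) < snd p).
Proof.
  assert (H : forall y, exists r, 0 < r /\ ballcpt y r).
  { intros y. destruct (HLC y) as [r [Hr H]]. exists r. split; auto. }
  destruct (choice _ H) as [rf Hrf].
  destruct (Hcc Y (fun y' x => exists l, d y' (act l x) < rf y')) as [ls Hls].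
  - intros y' x [l Hl]. exists (rf y' - d y' (act l x)). split; [lra|].
    intros y Hy. exists l.
    pose proof (d_tri Y d Hm y' (act l x) (act l y)).
    rewrite (act_iso Lam Y d act Hact) in H0. lra.
  - intros i g y [l Hl]. exists (gmul Lam l (ginv Lam g)).
    rewrite (actM Lam Y d act Hact), (act_VK Lam Y d act Hact). exact Hl.
  - intros y. exists y. exists (gone Lam). rewrite (act1 Lam Y d act Hact), (d_refl Y d Hm).
    apply Hrf.
  - exists (map (fun y => (y, rf y)) ls). split.
    + intros p Hp. apply in_map_iff in Hp. destruct Hp as [y [E _]]. subst p. simpl. apply Hrf.
    + intros y. destruct (Hls y) as [i [Hi [l Hl]]]. exists (i, rf i), l. split; auto.
      apply in_map_iff. exists i. auto.
Qed.

Section WithCover.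
Context (cov : list (Y * R))
  (Hcov1 : forall p, In p cov -> 0 < snd p /\ ballcpt (fst p) (snd p))
  (Hcov2 : forall y, exists p l, In p cov /\ d (fst p) (act l y) < snd p).

Definition inK (a : Y) : Prop := exists p, In p cov /\ d (fst p) a <= snd p.

Lemma decompose (y : Y) : exists mu q, inK q /\ y = act mu q.
Proof.
  destruct (Hcov2 y) as [p [l [Hp Hl]]]. exists (ginv Lam l), (act l y). split.
  - exists p. split; auto. lra.
  - rewrite (act_VK Lam Y d act Hact). reflexivity.
Qed.

Lemma seqK (x : nat -> Y) : (forall n, inK (x n)) ->
  exists phi z, incr phi /\ inK z /\ conv Y d (fun n => x (phi n)) z.
Proof.
  intros Hx. destruct (choice _ Hx) as [pf Hpf].
  destruct (pigeon _ cov pf (fun n => proj1 (Hpf n))) as [v [Hv [phi1 [Hphi1 E1]]]].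
  destruct (Hcov1 v Hv) as [_ Hb].
  destruct (Hb (fun n => x (phi1 n))) as [phi2 [z [Hphi2 [Hz Hc]]]].
  { intros n. rewrite <- (E1 n). apply Hpf. }
  exists (fun n => phi1 (phi2 n)), z. split; [apply incr_comp; auto|]. split.
  - exists v. auto.
  - exact Hc.
Qed.

Definition propr (x : Y) (r : R) : Prop :=
  exists l : list Lam, forall g, (exists z, d x z < r /\ d x (act g z) < r) -> In g l.

Lemma unif_prop : exists del, 0 < del /\ forall x, inK x -> propr x del.
Proof.
  apply NNPP. intros Hn.
  assert (H : forall n : nat, exists x, inK x /\ ~ propr x (1 / (INR n + 1))).
  { intros n. apply NNPP. intros Hn2. apply Hn. exists (1 / (INR n + 1)). split.
    - apply Rdiv_lt_0_compat; [lra|]. pose proof (pos_INR n). lra.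
    - intros x Hx. apply NNPP. intros Hx2. apply Hn2. exists x. auto. }
  destruct (choice _ H) as [xs Hxs].
  destruct (seqK xs (fun n => proj1 (Hxs n))) as [phi [z [Hphi [Hz Hc]]]].
  destruct (Hpr z) as [r [Hr [l Hl]]].
  destruct (Hc (r/2) ltac:(lra)) as [N1 HN1].
  destruct (arch_inv (r/2) ltac:(lra)) as [N2 HN2].
  set (n := Nat.max N1 N2).
  pose proof (incr_ge phi Hphi n).
  apply (proj2 (Hxs (phi n))). exists l. intros g [z' [H1 H2]].
  apply Hl. exists z'.
  assert (Hd : d (xs (phi n)) z < r / 2) by (apply HN1; lia).
  assert (He : 1 / (INR (phi n) + 1) < r / 2) by (apply HN2; lia).
  rewrite (d_sym Y d Hm) in Hd.
  pose proof (d_tri Y d Hm z (xs (phi n)) z').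
  pose proof (d_tri Y d Hm z (xs (phi n)) (act g z')).
  split; lra.
Qed.

Section WithDelta.
Context (del : R) (Hdel : 0 < del) (Hprop : forall x, inK x -> propr x del).
Let eta := del / 4.

Lemma Elist : exists El : list Lam,
  forall h q q', inK q -> inK q' -> d (act h q') q <= eta -> In h El.
Proof.
  apply NNPP. intros Hn.
  assert (H : forall l : list Lam, exists t : Lam * (Y * Y),
    inK (fst (snd t)) /\ inK (snd (snd t)) /\
    d (act (fst t) (snd (snd t))) (fst (snd t)) <= eta /\ ~ In (fst t) l).
  { intros l. apply NNPP. intros Hl. apply Hn. exists l. intros h q q' Hq Hq' Hd.
    apply NNPP. intros Hh. apply Hl. exists (h, (q, q')). simpl. auto. }
  destruct (choice _ H) as [F HF].
  set (Ls := fix Ls (n : nat) : list Lam :=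
         match n with O => nil | S k => fst (F (Ls k)) :: Ls k end).
  set (h := fun n => fst (F (Ls n))).
  set (q := fun n => fst (snd (F (Ls n)))).
  set (q' := fun n => snd (snd (F (Ls n)))).
  assert (Hin : forall m n, (m < n)%nat -> In (h m) (Ls n)).
  { intros m n Hmn. induction Hmn.
    - simpl. left. reflexivity.
    - simpl. right. auto. }
  assert (Hdist : forall m n, (m < n)%nat -> h m <> h n).
  { intros m n Hmn E. apply (proj2 (proj2 (proj2 (HF (Ls n))))). fold (h n). rewrite <- E. auto. }
  destruct (seqK q' (fun n => proj1 (proj2 (HF (Ls n))))) as [phi1 [z' [Hp1 [Hz' Hc1]]]].
  destruct (seqK (fun n => q (phi1 n)) (fun n => proj1 (HF (Ls (phi1 n)))))
    as [phi2 [z [Hp2 [Hz Hc2]]]].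
  set (psi := fun n => phi1 (phi2 n)).
  assert (Hpsi : incr psi) by exact (incr_comp phi1 phi2 Hp1 Hp2).
  pose proof (conv_sub Y d _ _ phi2 Hc1 Hp2) as Hc1'.
  destruct (Hc1' (eta/2) ltac:(unfold eta; lra)) as [Na HNa].
  destruct (Hc2 (eta/2) ltac:(unfold eta; lra)) as [Nb HNb].
  set (N0 := Nat.max Na Nb).
  assert (Hclose : forall n, (N0 <= n)%nat -> d (act (h (psi n)) z') z < 2 * eta).
  { intros n Hn0.
    pose proof (HNa n ltac:(lia)) as A1. pose proof (HNb n ltac:(lia)) as A2.
    simpl in A1, A2.
    pose proof (proj1 (proj2 (proj2 (HF (Ls (psi n)))))) as A3.
    fold (h (psi n)) in A3. fold (q (psi n)) (q' (psi n)) in A3.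
    pose proof (d_tri Y d Hm (act (h (psi n)) z') (act (h (psi n)) (q' (psi n))) z).
    pose proof (d_tri Y d Hm (act (h (psi n)) (q' (psi n))) (q (psi n)) z).
    rewrite (act_iso Lam Y d act Hact) in H0.
    rewrite (d_sym Y d Hm z' (q' (psi n))) in H0.
    unfold psi in *. lra. }
  destruct (Hprop z' Hz') as [l Hl].
  set (a := h (psi N0)).
  destruct (pigeon_gen _ (map (gmul Lam a) l) (fun n => h (psi n)) N0) as [v [_ [phi3 [Hp3 E3]]]].
  { intros n Hn0. apply in_map_iff. exists (gmul Lam (ginv Lam a) (h (psi n))). split.
    - apply g_KV.
    - apply Hl. exists z'. split.
      + rewrite (d_refl Y d Hm). lra.
      + rewrite (actM Lam Y d act Hact).
        rewrite <- (act_iso Lam Y d act Hact a), (act_KV Lam Y d act Hact).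
        pose proof (Hclose n Hn0). pose proof (Hclose N0 (le_n _)).
        pose proof (d_tri Y d Hm (act a z') z (act (h (psi n)) z')).
        rewrite (d_sym Y d Hm z (act (h (psi n)) z')) in H2. fold a in H1.
        unfold eta in *. lra. }
  apply (Hdist (psi (phi3 O)) (psi (phi3 1%nat))).
  - apply incr_mono; [exact Hpsi | apply Hp3].
  - rewrite E3, E3. reflexivity.
Qed.

Section WithEl.
Context (El : list Lam)
  (HEl : forall h q q', inK q -> inK q' -> d (act h q') q <= eta -> In h El).

Fixpoint prods (N : nat) : list Lam :=
  match N with
  | O => El
  | S k => flat_map (fun e => map (gmul Lam e) (prods k)) El
  end.

Lemma chain : forall N p t mu q mu' q',
  p = act mu q -> inK q -> t = act mu' q' -> inK q' -> d p t <= INR N * eta ->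
  In (gmul Lam (ginv Lam mu) mu') (prods N).
Proof.
  induction N as [|N IH]; intros p t mu q mu' q' Ep Hq Et Hq' Hd.
  - simpl in Hd. rewrite Rmult_0_l in Hd.
    assert (p = t).
    { apply (d_eq0 Y d Hm). pose proof (d_nonneg Y d Hm p t). lra. }
    simpl. apply (HEl _ q q' Hq Hq'). subst.
    rewrite (actM Lam Y d act Hact), <- H, (act_VK Lam Y d act Hact), (d_refl Y d Hm).
    unfold eta; lra.
  - assert (Hp1 : exists p1, d p p1 <= eta /\ d p1 t <= INR N * eta).
    { destruct (Rle_dec (d p t) eta) as [Hle|Hgt].
      - exists t. rewrite (d_refl Y d Hm). split; auto.
        pose proof (pos_INR N). unfold eta. nra.
      - assert (Hpt : 0 < d p t) by (unfold eta in *; lra).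
        destruct (between_exists Y d HY p t (eta / d p t)) as [p1 [B1 B2]].
        { split. - unfold Rdiv. apply Rmult_le_pos; [unfold eta in *; lra | apply Rlt_le, Rinv_0_lt_compat; lra].
          - apply (Rmult_le_reg_r (d p t)); auto. unfold Rdiv. rewrite Rmult_assoc, Rinv_l by lra. lra. }
        exists p1. rewrite B1, B2. rewrite S_INR in Hd.
        unfold Rdiv. split.
        + rewrite Rmult_assoc, Rinv_l by lra. lra.
        + rewrite Rmult_minus_distr_r, Rmult_assoc, Rinv_l by lra. lra. }
    destruct Hp1 as [p1 [H1 H2]].
    destruct (decompose p1) as [mu1 [q1 [Hq1 E1]]].
    pose proof (IH p1 t mu1 q1 mu' q' E1 Hq1 Et Hq' H2) as HI.
    assert (He : In (gmul Lam (ginv Lam mu) mu1) El).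
    { apply (HEl _ q q1 Hq Hq1). rewrite (actM Lam Y d act Hact), <- E1.
      assert (Eq : q = act (ginv Lam mu) p) by (rewrite Ep, (act_VK Lam Y d act Hact); reflexivity).
      rewrite Eq, (act_iso Lam Y d act Hact), (d_sym Y d Hm). exact H1. }
    simpl. apply in_flat_map. exists (gmul Lam (ginv Lam mu) mu1). split; auto.
    apply in_map_iff. exists (gmul Lam (ginv Lam mu1) mu'). split; auto.
    rewrite <- gmulA, g_KV. reflexivity.
Qed.

Lemma Fin (y : Y) (Rr : R) : exists l : list Lam, forall g, d y (act g y) <= Rr -> In g l.
Proof.
  destruct (decompose y) as [mu0 [q0 [Hq0 E0]]].
  assert (HN : exists N, Rr <= INR N * eta).
  { destruct (INR_unbounded (Rr / eta)) as [N HN]. exists N.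
    assert (0 < eta) by (unfold eta; lra).
    apply (Rmult_le_reg_r (/ eta)). apply Rinv_0_lt_compat; auto.
    rewrite Rmult_assoc, Rinv_r by lra. rewrite Rmult_1_r. unfold Rdiv in HN. lra. }
  destruct HN as [N HN].
  exists (map (fun x => gmul Lam mu0 (gmul Lam x (ginv Lam mu0))) (prods N)).
  intros g Hg. apply in_map_iff.
  exists (gmul Lam (ginv Lam mu0) (gmul Lam g mu0)). split.
  - rewrite <- !gmulA, g_KV, g_mulV_r, g_mul1_r. reflexivity.
  - apply (chain N y (act g y) mu0 q0 (gmul Lam g mu0) q0 E0 Hq0); auto.
    + rewrite (actM Lam Y d act Hact), E0. reflexivity.
    + lra.
Qed.

End WithEl.
End WithDelta.
End WithCover.
End Core1.


Definition Dsp (Y : Type) (d : Y -> Y -> R) (Lam : group) (act : Lam -> Y -> Y)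
  (S : list Lam) (x : Y) : R :=
  fold_right Rmax 0 (map (fun s => d x (act s x)) S).

Section Disp.
Context (Y : Type) (d : Y -> Y -> R) (HY : hadamard_space Y d)
  (Lam : group) (act : Lam -> Y -> Y) (Hact : isometric_action Lam Y d act).
Let Hm : metric Y d := proj1 HY.
Notation D := (Dsp Y d Lam act).

Lemma Dsp_nonneg S x : 0 <= D S x.
Proof.
  unfold Dsp. induction S; simpl; [lra|]. apply Rle_trans with (1 := IHS). apply Rmax_r.
Qed.

Lemma Dsp_ge S x s : In s S -> d x (act s x) <= D S x.
Proof.
  unfold Dsp. induction S as [|a S IH]; simpl; [tauto|]. intros [E|H].
  - subst. apply Rmax_l.
  - eapply Rle_trans; [apply IH; auto | apply Rmax_r].
Qed.

Lemma Dsp_le S x r : 0 <= r -> (forall s, In s S -> d x (act s x) <= r) -> D S x <= r.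
Proof.
  unfold Dsp. induction S as [|a S IH]; simpl; intros Hr H; auto.
  apply Rmax_lub; auto.
Qed.

Lemma Dsp_lip S x x' : D S x <= D S x' + 2 * d x x'.
Proof.
  apply Dsp_le.
  - pose proof (Dsp_nonneg S x'). pose proof (d_nonneg Y d Hm x x'). lra.
  - intros s Hs. pose proof (Dsp_ge S x' s Hs).
    pose proof (d_tri Y d Hm x x' (act s x)).
    pose proof (d_tri Y d Hm x' (act s x') (act s x)).
    rewrite (act_iso Lam Y d act Hact), (d_sym Y d Hm x' x) in H1. lra.
Qed.

Lemma Dsp_conv S P Q z t : 0 <= t <= 1 -> between Y d P Q t z ->
  D S z <= (1 - t) * D S P + t * D S Q.
Proof.
  intros Ht Hb. apply Dsp_le.
  - pose proof (Dsp_nonneg S P). pose proof (Dsp_nonneg S Q). nra.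
  - intros s Hs.
    pose proof (between_iso Y d (act s) P Q z t (act_iso Lam Y d act Hact s) Hb) as Hb'.
    pose proof (between_conv Y d HY P Q (act s P) (act s Q) z (act s z) t Ht Hb Hb').
    pose proof (Dsp_ge S P s Hs). pose proof (Dsp_ge S Q s Hs). nra.
Qed.

Lemma Dsp_conj S l a : D S (act l a) = D (map (conj Lam l) S) a.
Proof.
  unfold Dsp. induction S as [|s S IH]; simpl; auto. rewrite IH. f_equal.
  unfold conj. rewrite (actM Lam Y d act Hact), (actM Lam Y d act Hact).
  rewrite <- (act_iso Lam Y d act Hact l a), (act_KV Lam Y d act Hact). reflexivity.
Qed.

End Disp.


Fixpoint lists_of {A B : Type} (S : list B) (LL : list A) : list (list A) :=
  match S with
  | nil => nil :: nil
  | _ :: S' => flat_map (fun g => map (cons g) (lists_of S' LL)) LL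
  end.

Lemma lists_of_in {A B : Type} (f : B -> A) (S : list B) (LL : list A) :
  (forall s, In s S -> In (f s) LL) -> In (map f S) (lists_of S LL).
Proof.
  induction S as [|s S IH]; simpl; intros H; [left; auto|].
  apply in_flat_map. exists (f s). split; [apply H; auto|].
  apply in_map. apply IH. auto.
Qed.

Lemma map_eq_in {A B : Type} (f g : A -> B) (l : list A) :
  map f l = map g l -> forall x, In x l -> f x = g x.
Proof.
  induction l as [|a l IH]; simpl; intros H x Hx; [tauto|].
  injection H as H1 H2. destruct Hx as [E|Hx]; [subst; auto | auto].
Qed.

Section Main.
Context (Y : Type) (d : Y -> Y -> R) (HY : hadamard_space Y d)
  (Lam : group) (act : Lam -> Y -> Y) (Hact : isometric_action Lam Y d act)
  (Hpr : proper_action Lam Y d act)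
  (cov : list (Y * R))
  (Hcov1 : forall p, In p cov -> 0 < snd p /\ ballcpt Y d (fst p) (snd p))
  (Hcov2 : forall y, exists p l, In p cov /\ d (fst p) (act l y) < snd p).
Let Hm : metric Y d := proj1 HY.
Notation D := (Dsp Y d Lam act).
Notation K := (inK Y d cov).

Lemma FinAll (y : Y) (Rr : R) : exists l : list Lam, forall g, d y (act g y) <= Rr -> In g l.
Proof.
  destruct (unif_prop Y d HY Lam act Hpr cov Hcov1) as [del [Hdel Hprop]].
  destruct (Elist Y d HY Lam act Hact cov Hcov1 del Hdel Hprop) as [El HEl].
  exact (Fin Y d HY Lam act Hact cov Hcov2 del Hdel El HEl y Rr).
Qed.

Lemma finK (c : R) : exists LL : list Lam, forall g a, K a -> d a (act g a) <= c -> In g LL.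
Proof.
  assert (H : forall cov' : list (Y * R), exists LL : list Lam,
    forall g a p, In p cov' -> d (fst p) a <= snd p -> d a (act g a) <= c -> In g LL).
  { induction cov' as [|p cov' IH].
    - exists nil. intros g a p [].
    - destruct IH as [LL HLL]. destruct (FinAll (fst p) (c + 2 * snd p)) as [l1 Hl1].
      exists (l1 ++ LL). intros g a p' [E|Hp'] Hd Hg; apply in_or_app.
      + left. subst p'. apply Hl1.
        pose proof (d_tri Y d Hm (fst p) a (act g (fst p))).
        pose proof (d_tri Y d Hm a (act g a) (act g (fst p))).
        rewrite (act_iso Lam Y d act Hact), (d_sym Y d Hm a (fst p)) in H0. lra.
      + right. eapply HLL; eauto. }
  destruct (H cov) as [LL HLL]. exists LL. intros g a [p [Hp Hd]] Hg. eapply HLL; eauto.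
Qed.

Lemma patterns (S : list Lam) (c : R) : exists Pat : list (list Lam),
  forall l a, K a -> D S (act l a) <= c -> In (map (conj Lam l) S) Pat.
Proof.
  destruct (finK c) as [LL HLL]. exists (lists_of S LL). intros l a Ha HD.
  apply lists_of_in. intros s Hs. apply (HLL _ a Ha).
  unfold conj. rewrite (actM Lam Y d act Hact), (actM Lam Y d act Hact).
  rewrite <- (act_iso Lam Y d act Hact l), (act_KV Lam Y d act Hact).
  eapply Rle_trans; [|exact HD]. apply (Dsp_ge Y d Lam act). auto.
Qed.

Lemma gap (S : list Lam) (c : R) : 0 <= c ->
  exists eps, 0 < eps /\ forall x, (forall w, D S w <= c -> / 4 <= d x w) -> c + eps <= D S x.
Proof.
  intros Hc. apply NNPP. intros Hn.
  assert (H : forall n : nat, exists x, (forall w, D S w <= c -> / 4 <= d x w) /\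
                                   D S x < c + 1 / (INR n + 1)).
  { intros n. apply NNPP. intros Hn2. apply Hn. exists (1 / (INR n + 1)). split.
    - apply Rdiv_lt_0_compat; [lra|]. pose proof (pos_INR n). lra.
    - intros x Hx. apply NNPP. intros Hx2. apply Hn2. exists x. split; auto. lra. }
  destruct (choice _ H) as [xs Hxs].
  assert (Hdec : forall n, exists p : Lam * Y, K (snd p) /\ xs n = act (fst p) (snd p)).
  { intros n. destruct (decompose Y d Lam act Hact cov Hcov2 (xs n)) as [mu [q [Hq E]]].
    exists (mu, q). auto. }
  destruct (choice _ Hdec) as [dec Hd].
  destruct (patterns S (c + 1)) as [Pat HPat].
  assert (Hinv : forall n : nat, 1 / (INR n + 1) <= 1).
  { intros n. pose proof (pos_INR n). unfold Rdiv. rewrite Rmult_1_l.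
    rewrite <- Rinv_1. apply Rinv_le_contravar; lra. }
  destruct (pigeon _ Pat (fun n => map (conj Lam (fst (dec n))) S)) as [sig [_ [phi1 [Hp1 E1]]]].
  { intros n. apply (HPat _ (snd (dec n))). apply Hd.
    destruct (Hd n) as [_ E]. rewrite <- E. pose proof (proj2 (Hxs n)). pose proof (Hinv n). lra. }
  destruct (seqK Y d cov Hcov1 (fun n => snd (dec (phi1 n)))) as [phi2 [a [Hp2 [Ha Hc2]]]].
  { intros n. apply Hd. }
  assert (Key : forall n, D sig (snd (dec (phi1 (phi2 n)))) = D S (xs (phi1 (phi2 n)))).
  { intros n. rewrite <- (E1 (phi2 n)), <- (Dsp_conj Y d Lam act Hact).
    destruct (Hd (phi1 (phi2 n))) as [_ E]. rewrite <- E. reflexivity. }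
  assert (Hpsi : incr (fun n => phi1 (phi2 n))) by exact (incr_comp _ _ Hp1 Hp2).
  assert (HDa : D sig a <= c).
  { apply le_eps. intros e He.
    destruct (Hc2 (e/4) ltac:(lra)) as [N1 HN1].
    destruct (arch_inv (e/2) ltac:(lra)) as [N2 HN2].
    set (n := Nat.max N1 N2). pose proof (incr_ge _ Hpsi n).
    pose proof (HN1 n ltac:(lia)). simpl in H1.
    pose proof (HN2 (phi1 (phi2 n)) ltac:(lia)).
    pose proof (Dsp_lip Y d HY Lam act Hact sig a (snd (dec (phi1 (phi2 n))))).
    rewrite Key in H3. rewrite (d_sym Y d Hm) in H3.
    pose proof (proj2 (Hxs (phi1 (phi2 n)))). lra. }
  destruct (Hc2 (/4) ltac:(lra)) as [N3 HN3].
  pose proof (HN3 N3 (le_n _)) as Hclose. simpl in Hclose.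
  set (m := phi1 (phi2 N3)) in *.
  destruct (Hd m) as [_ Em].
  pose proof (proj1 (Hxs m) (act (fst (dec m)) a)) as Hfar.
  rewrite Em, (act_iso Lam Y d act Hact) in Hfar.
  assert (D S (act (fst (dec m)) a) <= c).
  { rewrite (Dsp_conj Y d Lam act Hact). unfold m. rewrite (E1 (phi2 N3)). exact HDa. }
  specialize (Hfar H0). lra.
Qed.

End Main.


Section Main2.
Context (Y : Type) (d : Y -> Y -> R) (HY : hadamard_space Y d)
  (Lam : group) (act : Lam -> Y -> Y) (Hact : isometric_action Lam Y d act)
  (Hpr : proper_action Lam Y d act)
  (cov : list (Y * R))
  (Hcov1 : forall p, In p cov -> 0 < snd p /\ ballcpt Y d (fst p) (snd p))
  (Hcov2 : forall y, exists p l, In p cov /\ d (fst p) (act l y) < snd p).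
Let Hm : metric Y d := proj1 HY.
Notation D := (Dsp Y d Lam act).
Notation K := (inK Y d cov).

Lemma linear (S : list Lam) (c eps : R) (y0 : Y) : 0 <= c -> 0 < eps -> D S y0 <= c ->
  (forall x, (forall w, D S w <= c -> / 4 <= d x w) -> c + eps <= D S x) ->
  forall p, exists w, D S w <= c /\ d p w <= 1 + D S p / (2 * eps).
Proof.
  intros Hc He Hy0 Hgap p.
  set (E := fun r => exists w, D S w <= c /\ r = - d p w).
  destruct (completeness E) as [m [Hub Hlub]].
  { exists 0. intros r [w [_ Er]]. subst. pose proof (d_nonneg Y d Hm p w). lra. }
  { exists (- d p y0). exists y0. auto. }
  set (del := - m).
  assert (F1 : forall w, D S w <= c -> del <= d p w).
  { intros w Hw. pose proof (Hub (- d p w) (ex_intro _ w (Logic.conj Hw eq_refl))). unfold del. lra. }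
  assert (F2 : forall e, 0 < e -> exists w, D S w <= c /\ d p w < del + e).
  { intros e He'. apply NNPP. intros Hn.
    assert (Hb : is_upper_bound E (m - e)).
    { intros r [w [Hw Er]]. subst r. apply Rnot_lt_le. intros Hlt. apply Hn. exists w.
      split; auto. unfold del. lra. }
    pose proof (Hlub _ Hb). lra. }
  pose proof (Dsp_nonneg Y d Lam act S p) as HDp.
  assert (Hq : 0 <= D S p / (2 * eps)).
  { unfold Rdiv. apply Rmult_le_pos; auto. apply Rlt_le, Rinv_0_lt_compat. lra. }
  destruct (Rlt_dec del (1/2)) as [Hsmall|Hbig].
  - destruct (F2 (1/2) ltac:(lra)) as [w [Hw Hdw]]. exists w. split; auto. lra.
  - destruct (F2 (1/4) ltac:(lra)) as [w [Hw Hdw]]. exists w. split; auto.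
    pose proof (F1 w Hw) as Hge.
    set (L := d p w) in *.
    assert (HL : 0 < L) by lra.
    set (t := (1/2) / L).
    assert (Ht : 0 <= t <= 1).
    { unfold t. split.
      - unfold Rdiv. apply Rmult_le_pos; [lra|]. apply Rlt_le, Rinv_0_lt_compat; lra.
      - apply (Rmult_le_reg_r L); auto. unfold Rdiv. rewrite Rmult_assoc, Rinv_l by lra. lra. }
    assert (HtL : t * L = 1/2) by (unfold t; field; lra).
    destruct (between_exists Y d HY w p t Ht) as [x [B1 B2]].
    assert (Hfar : forall w', D S w' <= c -> / 4 <= d x w').
    { intros w' Hw'. pose proof (F1 w' Hw'). pose proof (d_tri Y d Hm p x w').
      rewrite (d_sym Y d Hm p x), B2, (d_sym Y d Hm w p) in H0. fold L in H0. lra. }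
    pose proof (Hgap x Hfar) as Hx.
    pose proof (Dsp_conv Y d HY Lam act Hact S w p x t Ht (Logic.conj B1 B2)) as Hcv.
    assert (Hk : eps <= t * D S p).
    { assert ((1 - t) * D S w <= (1 - t) * c) by (apply Rmult_le_compat_l; lra).
      assert (t * c >= 0) by nra. lra. }
    assert (Hk2 : 2 * eps * L <= D S p).
    { assert (eps * L <= t * D S p * L) by (apply Rmult_le_compat_r; lra).
      replace (t * D S p * L) with (D S p * (t * L)) in H by ring. rewrite HtL in H. lra. }
    assert (L <= D S p / (2 * eps)).
    { apply (Rmult_le_reg_r (2 * eps)); [lra|]. unfold Rdiv. rewrite Rmult_assoc, Rinv_l by lra. lra. }
    lra.
Qed.

Lemma Kbound (y0 : Y) : exists KD, forall a, K a -> d y0 a <= KD.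
Proof.
  assert (H : forall cov' : list (Y * R), exists KD,
    forall a p, In p cov' -> d (fst p) a <= snd p -> d y0 a <= KD).
  { induction cov' as [|p cov' IH].
    - exists 0. intros a p [].
    - destruct IH as [KD HKD]. exists (Rmax KD (d y0 (fst p) + snd p)).
      intros a p' [E|Hp'] Hd.
      + subst. eapply Rle_trans; [|apply Rmax_r]. pose proof (d_tri Y d Hm y0 (fst p') a). lra.
      + eapply Rle_trans; [|apply Rmax_l]. eapply HKD; eauto. }
  destruct (H cov) as [KD HKD]. exists KD. intros a [p [Hp Hd]]. eapply HKD; eauto.
Qed.

Lemma reps (S : list Lam) (c : R) : forall P : list (list Lam), exists Rl : list (Lam * Y),
  (forall r, In r Rl -> K (snd r)) /\
  forall sig, In sig P -> (exists l a, K a /\ map (conj Lam l) S = sig) ->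
    exists r, In r Rl /\ map (conj Lam (fst r)) S = sig.
Proof.
  induction P as [|sig P IH].
  - exists nil. split; [intros r []|]. intros sig [].
  - destruct IH as [Rl [HR1 HR2]].
    destruct (classic (exists l a, K a /\ map (conj Lam l) S = sig)) as [[l [a [Ha E]]]|Hn].
    + exists ((l, a) :: Rl). split.
      * intros r [E'|Hr]; [subst; auto | auto].
      * intros sig' [E'|Hs] Hex.
        -- subst sig'. exists (l, a). split; [left; auto | auto].
        -- destruct (HR2 sig' Hs Hex) as [r [Hr Er]]. exists r. split; [right|]; auto.
    + exists Rl. split; auto. intros sig' [E'|Hs] Hex.
      * subst. contradiction.
      * auto.
Qed.

Lemma Mbound (y0 : Y) (Rl : list (Lam * Y)) : exists M, forall r, In r Rl -> d y0 (act (fst r) (snd r)) <= M.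
Proof.
  induction Rl as [|r Rl IH].
  - exists 0. intros r [].
  - destruct IH as [M HM]. exists (Rmax M (d y0 (act (fst r) (snd r)))).
    intros r' [E|Hr]; [subst; apply Rmax_r|]. eapply Rle_trans; [apply HM; auto | apply Rmax_l].
Qed.

Lemma bounded (S : list Lam) (c : R) (y0 : Y) : exists B0, forall w w',
  D S w <= c -> D S w' <= c ->
  exists z, (forall s, In s S -> gcomm Lam z s) /\ d w (act z w') <= B0.
Proof.
  destruct (patterns Y d HY Lam act Hact Hpr cov Hcov1 Hcov2 S c) as [Pat HPat].
  destruct (reps S c Pat) as [Rl [HR1 HR2]].
  destruct (Kbound y0) as [KD HKD].
  destruct (Mbound y0 Rl) as [M HM].
  exists (4 * KD + 2 * M). intros w w' Hw Hw'.
  destruct (decompose Y d Lam act Hact cov Hcov2 w) as [l [a [Ha Ew]]].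
  destruct (decompose Y d Lam act Hact cov Hcov2 w') as [l' [a' [Ha' Ew']]].
  assert (P1 : In (map (conj Lam l) S) Pat) by (apply HPat with a; auto; rewrite <- Ew; auto).
  assert (P2 : In (map (conj Lam l') S) Pat) by (apply HPat with a'; auto; rewrite <- Ew'; auto).
  destruct (HR2 _ P1 (ex_intro _ l (ex_intro _ a (Logic.conj Ha eq_refl)))) as [[l1 a1] [Hr1 E1]].
  destruct (HR2 _ P2 (ex_intro _ l' (ex_intro _ a' (Logic.conj Ha' eq_refl)))) as [[l2 a2] [Hr2 E2]].
  simpl in E1, E2.
  exists (gmul Lam (gmul Lam l (ginv Lam l1)) (gmul Lam l2 (ginv Lam l'))). split.
  - intros s Hs. apply gcomm_mul.
    + apply conj_eq_comm. symmetry. apply (map_eq_in _ _ S E1 s Hs).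
    + apply conj_eq_comm. apply (map_eq_in _ _ S E2 s Hs).
  - subst w w'.
    rewrite !(actM Lam Y d act Hact), (act_VK Lam Y d act Hact), (act_iso Lam Y d act Hact).
    rewrite <- (act_iso Lam Y d act Hact l1 a), (act_KV Lam Y d act Hact).
    pose proof (HR1 _ Hr1) as K1. pose proof (HR1 _ Hr2) as K2. simpl in K1, K2.
    pose proof (HM _ Hr1) as M1. pose proof (HM _ Hr2) as M2. simpl in M1, M2.
    pose proof (d_tri Y d Hm (act l1 a) (act l1 a1) (act l2 a')) as T1.
    pose proof (d_tri Y d Hm (act l1 a1) (act l2 a2) (act l2 a')) as T2.
    pose proof (d_tri Y d Hm (act l1 a1) y0 (act l2 a2)) as T3.
    rewrite !(act_iso Lam Y d act Hact) in T1, T2.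
    pose proof (d_tri Y d Hm a y0 a1) as T4. pose proof (d_tri Y d Hm a2 y0 a') as T5.
    pose proof (HKD a Ha). pose proof (HKD a' Ha'). pose proof (HKD a1 K1). pose proof (HKD a2 K2).
    rewrite (d_sym Y d Hm a y0) in T4. rewrite (d_sym Y d Hm a2 y0) in T5.
    rewrite (d_sym Y d Hm (act l1 a1) y0) in T3.
    lra.
Qed.

Lemma core_gen (S : list Lam) (y0 : Y) : exists A B, 0 <= A /\ forall p q r,
  D S p <= r -> D S q <= r ->
  exists z, (forall s, In s S -> gcomm Lam z s) /\ d p (act z q) <= A * r + B.
Proof.
  set (c := D S y0).
  assert (Hc : 0 <= c) by apply Dsp_nonneg.
  destruct (gap Y d HY Lam act Hact Hpr cov Hcov1 Hcov2 S c Hc) as [eps [He Hgap]].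
  destruct (bounded S c y0) as [B0 HB0].
  exists (1 / eps), (2 + B0). split.
  { unfold Rdiv. rewrite Rmult_1_l. apply Rlt_le, Rinv_0_lt_compat; auto. }
  intros p q r Hp Hq.
  destruct (linear S c eps y0 Hc He (Rle_refl _) Hgap p) as [w [Hw Hpw]].
  destruct (linear S c eps y0 Hc He (Rle_refl _) Hgap q) as [w' [Hw' Hqw]].
  destruct (HB0 w w' Hw Hw') as [z [Hz Hzd]].
  exists z. split; auto.
  pose proof (d_tri Y d Hm p w (act z q)).
  pose proof (d_tri Y d Hm w (act z w') (act z q)).
  rewrite (act_iso Lam Y d act Hact) in H0. rewrite (d_sym Y d Hm w' q) in H0.
  assert (D S p / (2 * eps) <= r / (2 * eps)).
  { unfold Rdiv. apply Rmult_le_compat_r; auto. apply Rlt_le, Rinv_0_lt_compat; lra. }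
  assert (D S q / (2 * eps) <= r / (2 * eps)).
  { unfold Rdiv. apply Rmult_le_compat_r; auto. apply Rlt_le, Rinv_0_lt_compat; lra. }
  assert (Er : 1 / eps * r = r / (2 * eps) + r / (2 * eps)) by (field; lra).
  lra.
Qed.

End Main2.

Lemma core_thm (Y : Type) (d : Y -> Y -> R) (HY : hadamard_space Y d) (HLC : locally_compact Y d)
  (Lam : group) (act : Lam -> Y -> Y) (Hact : isometric_action Lam Y d act)
  (Hpr : proper_action Lam Y d act) (Hcc : cocompact_action Lam Y d act)
  (S : list Lam) (y0 : Y) :
  exists A B, 0 <= A /\ forall p q r,
  Dsp Y d Lam act S p <= r -> Dsp Y d Lam act S q <= r ->
  exists z, (forall s, In s S -> gcomm Lam z s) /\ d p (act z q) <= A * r + B.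
Proof.
  destruct (cover_exists Y d HY HLC Lam act Hact Hcc) as [cov [H1 H2]].
  exact (core_gen Y d HY Lam act Hact Hpr cov H1 H2 S y0).
Qed.


Section Tree.
Context (G : mgraph) (T : graph) (pV : gV T -> gV G) (pE : gE T -> gE G)
  (Gam : group) (aV : Gam -> gV T -> gV T) (aE : Gam -> gE T -> gE T)
  (Huc : universal_covering_tree G T pV pE Gam aV aE)
  (lift : gE G -> gE T) (Hlift : forall e, pE (lift e) = e).

Lemma uc_src e : gsrc G (pE e) = pV (gsrc T e).
Proof. apply Huc. Qed.
Lemma uc_tgt e : gtgt G (pE e) = pV (gtgt T e).
Proof. apply Huc. Qed.
Lemma uc_inj v h1 h2 : hstart T h1 = v -> hstart T h2 = v ->
  (pE (fst h1), snd h1) = (pE (fst h2), snd h2) -> h1 = h2.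
Proof. apply Huc. Qed.
Lemma uc_aV1 v : aV (gone Gam) v = v.
Proof. apply Huc. Qed.
Lemma uc_aVM g h v : aV (gmul Gam g h) v = aV g (aV h v).
Proof. apply Huc. Qed.
Lemma uc_srcA g e : gsrc T (aE g e) = aV g (gsrc T e).
Proof. apply Huc. Qed.
Lemma uc_tgtA g e : gtgt T (aE g e) = aV g (gtgt T e).
Proof. apply Huc. Qed.
Lemma uc_pVA g v : pV (aV g v) = pV v.
Proof. apply Huc. Qed.
Lemma uc_pEA g e : pE (aE g e) = pE e.
Proof. apply Huc. Qed.
Lemma uc_simple v w : pV v = pV w -> exists g, aV g v = w /\ forall g', aV g' v = w -> g' = g.
Proof. apply Huc. Qed.
Lemma uc_conn : gconnected T.
Proof. apply Huc. Qed.

Lemma uc_unique g g' v : aV g v = aV g' v -> g = g'.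
Proof.
  intros E. destruct (uc_simple v (aV g v)) as [k [_ Hk]].
  - rewrite uc_pVA. reflexivity.
  - rewrite (Hk g eq_refl), (Hk g' (eq_sym E)). reflexivity.
Qed.

Lemma edge_translate e : exists g, aE g (lift (pE e)) = e.
Proof.
  set (e0 := lift (pE e)).
  assert (Hp : pV (gsrc T e0) = pV (gsrc T e)).
  { rewrite <- !uc_src. unfold e0. rewrite Hlift. reflexivity. }
  destruct (uc_simple _ _ Hp) as [g [Hg _]].
  exists g.
  assert (H : (aE g e0, true) = (e, true)).
  { apply (uc_inj (gsrc T e)).
    - simpl. unfold hstart. simpl. rewrite uc_srcA. auto.
    - reflexivity.
    - simpl. rewrite uc_pEA. unfold e0. rewrite Hlift. reflexivity. }
  injection H. auto.
Qed.

Definition Wl (x0 : gV T) : list (gV T) :=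
  x0 :: flat_map (fun e => gsrc T (lift e) :: gtgt T (lift e) :: nil) (mEdges G).

Lemma walk_end (x y : gV T) w : is_walk T x w y -> y = x \/ exists h, In h w /\ y = hend T h.
Proof.
  revert x. induction w as [|h w IH]; simpl; intros x Hw.
  - left. auto.
  - destruct Hw as [_ Hw]. destruct (IH _ Hw) as [E|[h' [Hh' E]]].
    + right. exists h. auto.
    + right. exists h'. auto.
Qed.

Lemma vertex_translate (x0 : gV T) (HE : forall e, In e (mEdges G)) v :
  exists w g, In w (Wl x0) /\ aV g w = v.
Proof.
  destruct uc_conn as [_ Hc]. destruct (Hc x0 v) as [wk Hwk].
  destruct (walk_end _ _ _ Hwk) as [E|[h [_ E]]].
  - exists x0, (gone Gam). split; [left; auto|]. rewrite uc_aV1. auto.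
  - destruct (edge_translate (fst h)) as [g Hg].
    destruct h as [e b]. simpl in *. unfold hend in E. simpl in E.
    destruct b.
    + exists (gtgt T (lift (pE e))), g. split.
      * right. apply in_flat_map. exists (pE e). split; auto. simpl. auto.
      * rewrite <- uc_tgtA, Hg. auto.
    + exists (gsrc T (lift (pE e))), g. split.
      * right. apply in_flat_map. exists (pE e). split; auto. simpl. auto.
      * rewrite <- uc_srcA, Hg. auto.
Qed.

Lemma S0_exists (L : list (gV T)) : exists S0 : list Gam,
  (forall wa wb g, In wa L -> In wb L -> aV g wa = wb -> In g S0) /\
  (forall g, In g S0 -> exists wa wb, In wa L /\ In wb L /\ aV g wa = wb).
Proof.
  assert (H : forall P : list (gV T * gV T), (forall p, In p P -> In (fst p) L /\ In (snd p) L) ->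
    exists S0 : list Gam,
    (forall wa wb g, In (wa, wb) P -> aV g wa = wb -> In g S0) /\
    (forall g, In g S0 -> exists wa wb, In wa L /\ In wb L /\ aV g wa = wb)).
  { induction P as [|[wa wb] P IH]; intros HP.
    - exists nil. split; [intros wa wb g []|intros g []].
    - destruct IH as [S1 [H1 H2]]. { intros p Hp. apply HP. right. auto. }
      destruct (classic (exists g, aV g wa = wb)) as [[g Hg]|Hn].
      + exists (g :: S1). split.
        * intros wa' wb' g' [E|Hin] Hg'.
          -- injection E as E1 E2. left. apply (uc_unique g g' wa'). rewrite Hg', <- E1, <- E2. exact Hg.
          -- right. eauto.
        * intros g' [E|Hin].
          -- subst g'. exists wa, wb. destruct (HP (wa, wb) (or_introl eq_refl)). auto.
          -- auto.
      + exists S1. split.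
        * intros wa' wb' g' [E|Hin] Hg'.
          -- injection E as E1 E2. subst. exfalso. apply Hn. eauto.
          -- eauto.
        * auto. }
  destruct (H (list_prod L L)) as [S0 [H1 H2]].
  { intros [a b] Hp. apply in_prod_iff in Hp. auto. }
  exists S0. split; auto. intros wa wb g Ha Hb Hg. apply (H1 wa wb); auto.
  apply in_prod; auto.
Qed.

Inductive Gen (S0 : list Gam) : Gam -> Prop :=
  | Gen1 : Gen S0 (gone Gam)
  | GenS s a : In s S0 -> Gen S0 a -> Gen S0 (gmul Gam s a).

Lemma generation (x0 : gV T) (HE : forall e, In e (mEdges G)) (S0 : list Gam)
  (HS0 : forall wa wb g, In wa (Wl x0) -> In wb (Wl x0) -> aV g wa = wb -> In g S0) :
  forall gam, Gen S0 gam.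
Proof.
  set (Good := fun v g => exists w, In w (Wl x0) /\ aV g w = v).
  assert (Hsame : forall v g1 g2, Good v g1 -> Good v g2 -> In (gmul Gam (ginv Gam g1) g2) S0).
  { intros v g1 g2 [w1 [Hw1 E1]] [w2 [Hw2 E2]]. apply (HS0 w2 w1); auto.
    rewrite uc_aVM, E2, <- E1, <- uc_aVM, gmulV, uc_aV1. auto. }
  assert (Hedge : forall h, Good (hstart T h) (fst (let (g, _) := constructive_indefinite_description _ (edge_translate (fst h)) in (g, tt)))
     /\ Good (hend T h) (fst (let (g, _) := constructive_indefinite_description _ (edge_translate (fst h)) in (g, tt)))).
  { intros h. destruct (constructive_indefinite_description _ (edge_translate (fst h))) as [g Hg].
    simpl. destruct h as [e b]. simpl in *. unfold hstart, hend. simpl.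
    split.
    - destruct b.
      + exists (gsrc T (lift (pE e))). split.
        * right. apply in_flat_map. exists (pE e). split; auto. simpl; auto.
        * rewrite <- uc_srcA, Hg. auto.
      + exists (gtgt T (lift (pE e))). split.
        * right. apply in_flat_map. exists (pE e). split; auto. simpl; auto.
        * rewrite <- uc_tgtA, Hg. auto.
    - destruct b.
      + exists (gtgt T (lift (pE e))). split.
        * right. apply in_flat_map. exists (pE e). split; auto. simpl; auto.
        * rewrite <- uc_tgtA, Hg. auto.
      + exists (gsrc T (lift (pE e))). split.
        * right. apply in_flat_map. exists (pE e). split; auto. simpl; auto.
        * rewrite <- uc_srcA, Hg. auto. }
  assert (Hwalk : forall w x y gx gy, is_walk T x w y -> Good x gx -> Good y gy ->
                  Gen S0 (gmul Gam (ginv Gam gx) gy)).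
  { induction w as [|h w IH]; intros x y gx gy Hw Hx Hy.
    - simpl in Hw. subst. rewrite <- (g_mul1_r Gam (gmul Gam (ginv Gam gx) gy)).
      apply GenS; [apply (Hsame y); auto | apply Gen1].
    - simpl in Hw. destruct Hw as [Hs Hw].
      destruct (Hedge h) as [G1 G2].
      set (g := fst _) in G1, G2.
      assert (E : gmul Gam (ginv Gam gx) gy
                = gmul Gam (gmul Gam (ginv Gam gx) g) (gmul Gam (ginv Gam g) gy)).
      { rewrite <- gmulA, g_KV. reflexivity. }
      rewrite E. apply GenS.
      + apply (Hsame x); auto. rewrite <- Hs. auto.
      + apply (IH (hend T h) y); auto. }
  intros gam. destruct uc_conn as [_ Hc]. destruct (Hc x0 (aV gam x0)) as [wk Hwk].
  rewrite <- (gmul1 Gam gam). rewrite <- g_inv1 at 1.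
  apply (Hwalk wk x0 (aV gam x0)); auto.
  - exists x0. split; [left; auto | apply uc_aV1].
  - exists x0. split; [left; auto | auto].
Qed.

End Tree.


Section Len.
Context (Y : Type) (d : Y -> Y -> R) (Hm : metric Y d).

Lemma curve_has_length (c : R -> Y) (a b : R) : a <= b -> rectifiable Y d c a b ->
  has_length Y d c a b (curve_length Y d c a b).
Proof.
  intros Hab Hr. unfold curve_length.
  apply (epsilon_spec (inhabits 0) (fun l => has_length Y d c a b l)).
  destruct (completeness (polygonal_sums Y d c a b) Hr) as [m Hm'].
  - exists (d (c a) (c b)). exists 1%nat, (fun i => match i with O => a | _ => b end).
    split; [auto|]. split; [auto|]. split.
    + intros i Hi. destruct i; [lra | lia].
    + simpl. ring.
  - exists m. exact Hm'.
Qed.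

Lemma curve_bound (c : R -> Y) (a b t : R) : a <= t <= b -> rectifiable Y d c a b ->
  d (c a) (c t) <= curve_length Y d c a b.
Proof.
  intros Ht Hr. destruct (curve_has_length c a b ltac:(lra) Hr) as [Hub _].
  pose proof (d_nonneg Y d Hm (c t) (c b)).
  apply Rle_trans with (d (c a) (c t) + d (c t) (c b)); [lra|].
  apply Hub. exists 2%nat, (fun i => match i with O => a | S O => t | _ => b end).
  split; [auto|]. split; [auto|]. split.
  - intros i Hi. destruct i as [|[|i]]; simpl; lra.
  - simpl. ring.
Qed.

Lemma curve_nonneg (c : R -> Y) (a b : R) : a <= b -> rectifiable Y d c a b ->
  0 <= curve_length Y d c a b.
Proof.
  intros Hab Hr. pose proof (curve_bound c a b a ltac:(lra) Hr).
  rewrite (d_refl Y d Hm) in H. auto.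
Qed.
End Len.

Lemma sum_ge {A : Type} (f : A -> R) (l : list A) (x : A) :
  (forall y, In y l -> 0 <= f y) -> In x l -> f x <= fold_right Rplus 0 (map f l).
Proof.
  induction l as [|a l IH]; simpl; intros H Hx; [tauto|].
  assert (0 <= fold_right Rplus 0 (map f l)).
  { clear IH Hx. induction l; simpl; [lra|]. pose proof (H a0 (or_intror (or_introl eq_refl))).
    assert (0 <= fold_right Rplus 0 (map f l)); [|lra].
    apply IHl. intros y [E|Hy]; apply H; [left|right; right]; auto. }
  destruct Hx as [E|Hx].
  - subst. lra.
  - pose proof (H a (or_introl eq_refl)). pose proof (IH (fun y Hy => H y (or_intror Hy)) Hx). lra.
Qed.

Lemma sum_nonneg {A : Type} (f : A -> R) (l : list A) :
  (forall y, In y l -> 0 <= f y) -> 0 <= fold_right Rplus 0 (map f l).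
Proof.
  induction l as [|a l IH]; simpl; intros H; [lra|].
  pose proof (H a (or_introl eq_refl)). pose proof (IH (fun y Hy => H y (or_intror Hy))). lra.
Qed.

Section Assembly.
Context (G : mgraph) (T : graph) (pV : gV T -> gV G) (pE : gE T -> gE G)
  (Gam : group) (aV : Gam -> gV T -> gV T) (aE : Gam -> gE T -> gE T)
  (Y : Type) (d : Y -> Y -> R)
  (Lam : group) (act : Lam -> Y -> Y) (rho : Gam -> Lam)
  (lift : gE G -> gE T)
  (Hfin : finite_metric_graph G)
  (Huc : universal_covering_tree G T pV pE Gam aV aE)
  (HY : hadamard_space Y d)
  (Hact : isometric_action Lam Y d act)
  (Hrho : group_hom Gam Lam rho)
  (Hlift : forall e, pE (lift e) = e).
Let Hm : metric Y d := proj1 HY.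
Let lenT := fun e : gE T => mlen G (pE e).

Section U.
Context (u : tmap T Y) (Hu : tmap_ok T lenT Y d u)
  (Heu : equivariant T lenT Gam Lam aV aE Y act rho u)
  (Hru : loc_rectifiable T lenT Y d u).
Let Lu := total_length G T lift Y d u.

Lemma term_nonneg e : 0 <= curve_length Y d (mE u (lift e)) 0 (mlen G e).
Proof.
  apply (curve_nonneg Y d Hm).
  - destruct Hfin as [_ [_ [_ Hpos]]]. apply Rlt_le, Hpos.
  - pose proof (Hru (lift e)). unfold lenT in H. rewrite Hlift in H. exact H.
Qed.

Lemma Lu_nonneg : 0 <= Lu.
Proof. apply sum_nonneg. intros y _. apply term_nonneg. Qed.

Lemma edge_bound e t : 0 <= t <= lenT e -> d (mE u e 0) (mE u e t) <= Lu.
Proof.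
  intros Ht.
  destruct (edge_translate G T pV pE Gam aV aE Huc lift Hlift e) as [g Hg].
  set (e1 := pE e) in *. set (e0 := lift e1) in *.
  assert (Hlen : lenT e0 = lenT e) by (unfold lenT, e0; rewrite Hlift; reflexivity).
  rewrite <- Hg.
  destruct Heu as [_ HE].
  rewrite (HE g e0 0) by (unfold lenT in *; rewrite Hlen; lra).
  rewrite (HE g e0 t) by (rewrite Hlen; lra).
  rewrite (act_iso Lam Y d act Hact).
  eapply Rle_trans.
  - apply (curve_bound Y d Hm (mE u e0) 0 (lenT e0) t); [rewrite Hlen; lra | apply Hru].
  - unfold Lu, total_length.
    assert (E : lenT e0 = mlen G e1) by (unfold lenT, e0; rewrite Hlift; reflexivity).
    rewrite E.
    apply (sum_ge (fun e => curve_length Y d (mE u (lift e)) 0 (mlen G e))).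
    + intros y _. apply term_nonneg.
    + destruct Hfin as [_ [_ [HE' _]]]. apply HE'.
Qed.

Lemma half_edge_bound h : d (mV u (hstart T h)) (mV u (hend T h)) <= Lu.
Proof.
  destruct h as [e b]. unfold hstart, hend. simpl.
  destruct (Hu e) as [H0 [H1 _]].
  assert (Hl : 0 <= lenT e).
  { unfold lenT. destruct Hfin as [_ [_ [_ Hpos]]]. apply Rlt_le, Hpos. }
  pose proof (edge_bound e (lenT e) ltac:(lra)).
  rewrite H0, H1 in H.
  destruct b; auto. rewrite (d_sym Y d Hm). auto.
Qed.

Lemma walk_bound : forall w x y, is_walk T x w y -> d (mV u x) (mV u y) <= INR (length w) * Lu.
Proof.
  induction w as [|h w IH]; intros x y Hw; simpl in Hw.
  - subst. rewrite (d_refl Y d Hm). simpl. lra.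
  - change (length (h :: w)) with (S (length w)). destruct Hw as [Hs Hw]. pose proof (IH _ _ Hw).
    pose proof (half_edge_bound h). rewrite Hs in H0.
    pose proof (d_tri Y d Hm (mV u x) (mV u (hend T h)) (mV u y)).
    rewrite S_INR. lra.
Qed.
End U.

Lemma K_exists (x0 : gV T) (L : list (gV T)) :
  exists K : nat, forall w, In w L -> exists wk, is_walk T x0 wk w /\ (length wk <= K)%nat.
Proof.
  destruct (uc_conn G T pV pE Gam aV aE Huc) as [_ Hc].
  induction L as [|w L IH].
  - exists O. intros w [].
  - destruct IH as [K HK]. destruct (Hc x0 w) as [wk Hwk].
    exists (Nat.max K (length wk)). intros w' [E|Hw'].
    + subst. exists wk. split; auto. lia.
    + destruct (HK w' Hw') as [wk' [H1 H2]]. exists wk'. split; auto. lia.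
Qed.

Lemma rho1 : rho (gone Gam) = gone Lam.
Proof.
  apply (g_cancel_l Lam (rho (gone Gam))). rewrite <- Hrho, gmul1, g_mul1_r. reflexivity.
Qed.

Lemma gen_comm (S0 : list Gam) (z : Lam) :
  (forall s, In s S0 -> gcomm Lam z (rho s)) -> forall a, Gen Gam S0 a -> gcomm Lam z (rho a).
Proof.
  intros H a Ha. induction Ha.
  - rewrite rho1. unfold gcomm. rewrite gmul1, g_mul1_r. reflexivity.
  - rewrite Hrho. unfold gcomm in *. rewrite gmulA, H by auto. rewrite <- gmulA, IHHa, gmulA.
    reflexivity.
Qed.

End Assembly.


Theorem theorem4
  (G : mgraph) (T : graph) (pV : gV T -> gV G) (pE : gE T -> gE G)
  (Gam : group) (aV : Gam -> gV T -> gV T) (aE : Gam -> gE T -> gE T)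
  (Y : Type) (d : Y -> Y -> R)
  (Lam : group) (act : Lam -> Y -> Y) (rho : Gam -> Lam)
  (lift : gE G -> gE T) :
  finite_metric_graph G ->
  gconnected G ->
  no_terminal_vertices G ->
  universal_covering_tree G T pV pE Gam aV aE ->
  hadamard_space Y d ->
  locally_compact Y d ->
  isometric_action Lam Y d act ->
  proper_action Lam Y d act ->
  cocompact_action Lam Y d act ->
  group_hom Gam Lam rho ->
  (forall e, pE (lift e) = e) ->
  let lenT := fun e : gE T => mlen G (pE e) in
  exists Cstar C : R,
    forall u v : tmap T Y,
      tmap_ok T lenT Y d u -> tmap_ok T lenT Y d v ->
      equivariant T lenT Gam Lam aV aE Y act rho u ->
      equivariant T lenT Gam Lam aV aE Y act rho v ->
      loc_rectifiable T lenT Y d u -> loc_rectifiable T lenT Y d v ->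
      exists h : Lam,
        in_centraliser Gam Lam rho h /\
        width_le T lenT Y d u (translate act h v)
          (Cstar * (total_length G T lift Y d u + total_length G T lift Y d v) + C).
Proof.
  intros Hfin Hconn Hnt Huc HY HLC Hact Hpr Hcc Hrho Hlift lenT.
  pose proof (proj1 HY) as Hm.
  destruct (uc_conn G T pV pE Gam aV aE Huc) as [[x0] _].
  destruct (classic (inhabited Y)) as [[y0]|HnY].
  2:{ exists 0, 0. intros u. exfalso. apply HnY. exact (inhabits (mV u x0)). }
  set (W := Wl G T lift x0).
  destruct (S0_exists G T pV pE Gam aV aE Huc W) as [S0 [HS1 HS2]].
  assert (HE : forall e, In e (mEdges G)) by apply Hfin.
  pose proof (generation G T pV pE Gam aV aE Huc lift Hlift x0 HE S0 HS1) as Hgen.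
  destruct (K_exists G T pV pE Gam aV aE Huc x0 W) as [K HK].
  destruct (core_thm Y d HY HLC Lam act Hact Hpr Hcc (map rho S0) y0) as [A [B [HA Hcore]]].
  exists (INR K + 1 + 2 * A * INR K), B.
  intros u v Hu Hv Heu Hev Hru Hrv.
  set (Lu := total_length G T lift Y d u).
  set (Lv := total_length G T lift Y d v).
  pose proof (Lu_nonneg G T pE Y d lift Hfin HY Hlift u Hru) as HLu.
  pose proof (Lu_nonneg G T pE Y d lift Hfin HY Hlift v Hrv) as HLv.
  fold Lu in HLu. fold Lv in HLv.
  pose proof (pos_INR K) as HK0.
  assert (HWu : forall w, In w W -> d (mV u x0) (mV u w) <= INR K * Lu).
  { intros w Hw. destruct (HK w Hw) as [wk [Hwk Hl]].
    pose proof (walk_bound G T pV pE Gam aV aE Y d Lam act rho lift Hfin Huc HY Hact Hlift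
                 u Hu Heu Hru wk x0 w Hwk).
    apply le_INR in Hl. fold Lu in H. nra. }
  assert (HWv : forall w, In w W -> d (mV v x0) (mV v w) <= INR K * Lv).
  { intros w Hw. destruct (HK w Hw) as [wk [Hwk Hl]].
    pose proof (walk_bound G T pV pE Gam aV aE Y d Lam act rho lift Hfin Huc HY Hact Hlift
                 v Hv Hev Hrv wk x0 w Hwk).
    apply le_INR in Hl. fold Lv in H. nra. }
  assert (Hdisp : forall (uu : tmap T Y) L, equivariant T lenT Gam Lam aV aE Y act rho uu ->
            (forall w, In w W -> d (mV uu x0) (mV uu w) <= INR K * L) -> 0 <= L ->
            Dsp Y d Lam act (map rho S0) (mV uu x0) <= 2 * INR K * L).
  { intros uu L Heq HW HL. apply Dsp_le. { apply Rmult_le_pos; [apply Rmult_le_pos; [lra | apply pos_INR] | exact HL]. }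
    intros s Hs. apply in_map_iff in Hs. destruct Hs as [g [Eg Hg]]. subst s.
    destruct (HS2 g Hg) as [wa [wb [Ha [Hb Eab]]]].
    destruct Heq as [HeqV _].
    pose proof (d_tri Y d Hm (mV uu x0) (mV uu wb) (mV uu (aV g x0))).
    rewrite <- Eab in H at 2. rewrite !HeqV, (act_iso Lam Y d act Hact) in H.
    rewrite (d_sym Y d Hm (mV uu wa)) in H.
    pose proof (HW wb Hb). pose proof (HW wa Ha). lra. }
  assert (HDu : Dsp Y d Lam act (map rho S0) (mV u x0) <= 2 * INR K * (Lu + Lv)).
  { eapply Rle_trans; [apply (Hdisp u Lu); auto|]. nra. }
  assert (HDv : Dsp Y d Lam act (map rho S0) (mV v x0) <= 2 * INR K * (Lu + Lv)).
  { eapply Rle_trans; [apply (Hdisp v Lv); auto|]. nra. }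
  destruct (Hcore _ _ _ HDu HDv) as [z [Hz Hzd]].
  assert (Hcomm : forall g, gcomm Lam z (rho g)).
  { intros g. apply (gen_comm Gam Lam rho Hrho S0 z); auto.
    intros s Hs. apply Hz. apply in_map. auto. }
  exists z. split.
  { intros g. apply Hcomm. }
  set (Bd := INR K * Lu + (A * (2 * INR K * (Lu + Lv)) + B) + INR K * Lv).
  assert (Hvert : forall v', d (mV u v') (act z (mV v v')) <= Bd).
  { intros v'.
    destruct (vertex_translate G T pV pE Gam aV aE Huc lift Hlift x0 HE v') as [w [g [Hw Eg]]].
    subst v'. destruct Heu as [HuV _]. destruct Hev as [HvV _].
    rewrite HuV, HvV.
    rewrite <- (actM Lam Y d act Hact z), (Hcomm g), (actM Lam Y d act Hact), (act_iso Lam Y d act Hact).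
    pose proof (d_tri Y d Hm (mV u w) (mV u x0) (act z (mV v w))).
    pose proof (d_tri Y d Hm (mV u x0) (act z (mV v x0)) (act z (mV v w))).
    rewrite (act_iso Lam Y d act Hact) in H0.
    rewrite (d_sym Y d Hm (mV u w) (mV u x0)) in H.
    pose proof (HWu w Hw). pose proof (HWv w Hw). unfold Bd. lra. }
  assert (Harith : Bd + Lu + Lv <= (INR K + 1 + 2 * A * INR K) * (Lu + Lv) + B).
  { unfold Bd. right. ring. }
  intros x Hx. destruct x as [v'|e t]; simpl in *.
  - pose proof (Hvert v'). lra.
  - unfold translate. simpl.
    pose proof (edge_bound G T pV pE Gam aV aE Y d Lam act rho lift Hfin Huc HY Hact Hlift
                 u Heu Hru e t Hx) as Eu.
    pose proof (edge_bound G T pV pE Gam aV aE Y d Lam act rho lift Hfin Huc HY Hact Hlift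
                 v Hev Hrv e t Hx) as Ev.
    fold Lu in Eu. fold Lv in Ev.
    destruct (Hu e) as [Hu0 _]. destruct (Hv e) as [Hv0 _].
    pose proof (Hvert (gsrc T e)) as Hs. rewrite <- Hu0, <- Hv0 in Hs.
    pose proof (d_tri Y d Hm (mE u e t) (mE u e 0) (act z (mE v e t))).
    pose proof (d_tri Y d Hm (mE u e 0) (act z (mE v e 0)) (act z (mE v e t))).
    rewrite (act_iso Lam Y d act Hact) in H0.
    rewrite (d_sym Y d Hm (mE u e t) (mE u e 0)) in H.
    lra.
Qed.
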